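(* For every distribution $q$ over $[n]$ and every $x\in(0,1)$, \[ \max_{S\subseteq[n]:\ q(S)\ge x} R(q,S)\ \ge\ \frac{\|q_{-x}\|_{1/2}}{(\log_2(n/x)+1)^2}-4 . \]
   Context: For nonempty $S\subseteq[n]$, $q(S)=\sum_{i\in S}q_i$, $M(q,S)=\max_{i\in S}q_i$ and $R(q,S)=\big\lfloor \frac{q(S)}{2M(q,S)}\big\rfloor$. For $x\ge0$, $q_{-x}$ is the vector obtained from $q$ by iteratively removing its smallest entries, stopping just before the total of the removed entries would exceed $x$. For a nonnegative vector $v$ and $r\in(0,1)$, $\|v\|_r=(\sum_i v_i^r)^{1/r}$. *)

(* Defs.v *)
From mathcomp Require Import all_boot all_order all_algebra.
From mathcomp Require Import all_classical all_reals all_analysis.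
Set Implicit Arguments. Unset Strict Implicit. Unset Printing Implicit Defensive.
Import Order.TTheory GRing.Theory Num.Theory.
Local Open Scope ring_scope.

Section Defs.
Variable R : realType.
Variable n : nat.

Definition qS (q : 'I_n -> R) (S : {set 'I_n}) : R := \sum_(i in S) q i.

(* M(q,S) = max_{i in S} q_i  (only used for nonempty S; entries are >= 0) *)
Definition qM (q : 'I_n -> R) (S : {set 'I_n}) : R := \big[Num.max/0]_(i in S) q i.

Definition Rqs (q : 'I_n -> R) (S : {set 'I_n}) : int :=
  Num.floor (qS q S / (2 * qM q S)).
End Defs.

Fixpoint remove_small {R : realType} (x : R) (s : seq R) : seq R :=
  match s with
  | [::] => [::]
  | a :: s' => if a <= x then remove_small (x - a) s' else s
  end.

(* q_{-x}, as the (ascending) list of remaining entries *)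
Definition q_minus {R : realType} {n : nat} (q : 'I_n -> R) (x : R) : seq R :=
  remove_small x (sort <=%R [seq q i | i <- enum 'I_n]).

Definition rnorm {R : realType} (r : R) (v : seq R) : R :=
  (\sum_(a <- v) a `^ r) `^ r^-1.

Definition log2 {R : realType} (y : R) : R := ln y / ln 2.

(* Main.v *)
Require Import Defs.
From mathcomp Require Import all_boot all_order all_algebra.
From mathcomp Require Import all_classical all_reals all_analysis.
From mathcomp Require Import ring lra zify.
Import Order.TTheory GRing.Theory Num.Theory.
Local Open Scope ring_scope.
Section H1sec.
Variable R : realType.

Lemma remove_smallE (x : R) (s : seq R) : 0 <= x ->
  exists r, [/\ remove_small x s = drop r s, \sum_(b <- take r s) b <= x &
    (r < size s)%N -> x < \sum_(b <- take r.+1 s) b].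
Proof.
elim: s x => [|a s IH] x x0 /=.
  by exists 0%N; rewrite big_nil.
case: ifP => ax.
  have [|r [E1 E2 E3]] := IH (x - a); first by rewrite subr_ge0.
  exists r.+1; rewrite /= !big_cons; split => //.
    by rewrite -lerBrDl.
  by move=> /E3; rewrite ltrBlDl.
exists 0%N; rewrite take0 big_nil; split => //.
by rewrite take0 big_cons big_nil addr0 ltNge ax.
Qed.

Fixpoint good (A c : R) (v : seq R) : Prop :=
  match v with [::] => True | a :: v' => c + a <= A * a /\ good A (c + a) v' end.

Lemma good_intro A c v :
  (forall j, (j < size v)%N -> c + \sum_(b <- take j.+1 v) b <= A * nth 0 v j) ->
  good A c v.
Proof.
elim: v c => [|a v IH] c //= H; split.
  by have := H 0%N isT; rewrite /= take0 big_cons big_nil addr0.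
apply: IH => j hj; have := H j.+1 hj; rewrite /= big_cons addrA //.
Qed.

Lemma good_bound A c v : 0 <= A -> 0 <= c -> all (fun b => 0 <= b) v -> good A c v ->
  \sum_(a <- v) Num.sqrt a <= 2 * Num.sqrt A * (Num.sqrt (c + \sum_(b <- v) b) - Num.sqrt c).
Proof.
move=> A0; elim: v c => [|a v IH] c c0 /=.
  by rewrite !big_nil addr0 subrr mulr0.
case/andP => a0 allv [h1 h2].
rewrite !big_cons.
have ca0 : 0 <= c + a by rewrite addr_ge0.
have := IH (c + a) ca0 allv h2; rewrite addrA => IH'.
suff : Num.sqrt a <= 2 * Num.sqrt A * (Num.sqrt (c + a) - Num.sqrt c) by
  move=> h; lra.
set s := Num.sqrt a; set t := Num.sqrt (c + a); set u := Num.sqrt c; set g := Num.sqrt A.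
have s0 : 0 <= s := sqrtr_ge0 _.
have t0 : 0 <= t := sqrtr_ge0 _.
have u0 : 0 <= u := sqrtr_ge0 _.
have g0 : 0 <= g := sqrtr_ge0 _.
have ss : s ^+ 2 = a by rewrite sqr_sqrtr.
have tt : t ^+ 2 = c + a by rewrite sqr_sqrtr.
have uu : u ^+ 2 = c by rewrite sqr_sqrtr.
have gg : g ^+ 2 = A by rewrite sqr_sqrtr.
have ut : u <= t by rewrite ler_sqrt // lerDl.
have tgs : t <= g * s.
  by rewrite -(ler_pXn2r (_ : 0 < 2)%N) ?nnegrE ?mulr_ge0 // exprMn tt gg ss.
have [t0e|tpos] := eqVneq t 0.
  have ca : c + a = 0 by rewrite -tt t0e expr0n.
  have a00 : a = 0 by lra.
  have : s ^+ 2 == 0 by rewrite ss a00.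
  rewrite sqrf_eq0 => /eqP ->.
  have : u <= 0 by rewrite -t0e.
  rewrite t0e => hu; have -> : u = 0 by lra.
  by rewrite subrr mulr0.
have tp : 0 < t by rewrite lt_def tpos t0.
have h3 : s * t <= g * (s ^+ 2) by nra.
have h4 : s ^+ 2 <= 2 * t * (t - u) by nra.
have : s * t <= 2 * g * (t - u) * t by nra.
move=> h5; nra.
Qed.

Lemma cs_bound (v : seq R) : all (fun b => 0 <= b) v ->
  (\sum_(a <- v) Num.sqrt a) ^+ 2 <= (size v)%:R * \sum_(a <- v) a.
Proof.
elim: v => [|a v IH] /=; first by rewrite !big_nil expr0n /= mul0r.
case/andP => a0 allv; have h := IH allv; rewrite !big_cons.
set t := \sum_(a <- v) Num.sqrt a in h *; set S := \sum_(a <- v) a in h *.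
set k := (size v)%:R in h *.
have S0 : 0 <= S by rewrite /S big_seq sumr_ge0 // => i /(allP allv).
have k0 : 0 <= k by rewrite /k ler0n.
have t0 : 0 <= t by rewrite /t sumr_ge0 // => i _; exact: sqrtr_ge0.
set s := Num.sqrt a. have s0 : 0 <= s := sqrtr_ge0 _.
have ss : s ^+ 2 = a by rewrite sqr_sqrtr.
rewrite -ss -natr1 -/k.
have [k0e|kp] := eqVneq k 0.
  rewrite k0e mul0r in h; rewrite k0e add0r mul1r.
  have : t ^+ 2 == 0 by rewrite eq_le h sqr_ge0.
  rewrite sqrf_eq0 => /eqP ->; by rewrite addr0 lerDl.
have kpos : 0 < k by rewrite lt_def kp k0.
(* 2ts <= t^2/k + k s^2 <= S + k s^2 *)
have h2 : 2 * t * s * k <= t ^+ 2 + k ^+ 2 * s ^+ 2.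
  have := sqr_ge0 (t - k * s); nra.
have h3 : 2 * t * s <= S + k * s ^+ 2.
  rewrite -(ler_pM2r kpos); nra.
nra.
Qed.
End H1sec.
Section H2sec.
Variable R : realType.

Lemma take_le (w : seq R) k : sorted <=%R w -> (k < size w)%N ->
  all (fun b => b <= nth 0 w k) (take k.+1 w).
Proof.
move=> sw hk; apply/(all_nthP 0) => i; rewrite size_take.
move=> hi; have hik : (i <= k)%N.
  move: hi; case: (ltnP k.+1 (size w)) => h hi //.
  by rewrite -ltnS (leq_trans hi).
rewrite nth_take; last by [].
by apply: (sorted_leq_nth le_trans lexx) => //; rewrite inE //; apply: leq_ltn_trans hk.
Qed.

Lemma sum_filter_all (t : seq R) a : all (fun b => b <= a) t ->
  \sum_(b <- t | b <= a) b = \sum_(b <- t) b.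
Proof.
elim: t => [|b t IH] /=; first by rewrite !big_nil.
by case/andP => hb /IH h; rewrite !big_cons hb h.
Qed.

Lemma bigmax_eq (I : finType) (S : {set I}) (F : I -> R) a i0 :
  0 <= a -> i0 \in S -> F i0 = a -> (forall i, i \in S -> F i <= a) ->
  \big[Num.max/0]_(i in S) F i = a.
Proof.
move=> a0 iS Fi hF; apply/le_anti/andP; split.
  apply: (big_ind (fun y => y <= a)) => //.
    by move=> y z hy hz; rewrite ge_max hy hz.
have : forall s, i0 \in s -> a <= \big[Num.max/0]_(i <- s | i \in S) F i.
  elim => // b s IH; rewrite inE big_cons; case/orP => [/eqP <-|/IH h].
    by rewrite iS le_max Fi lexx.
  by case: ifP => // _; rewrite le_max h orbT.
by apply; rewrite mem_index_enum.
Qed.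
Lemma sum_take_le (w : seq R) k (P : pred R) : all (fun b => 0 <= b) w ->
  \sum_(b <- take k w | P b) b <= \sum_(b <- w | P b) b.
Proof.
move=> w0; rewrite -{2}(cat_take_drop k w) big_cat lerDl.
rewrite big_seq_cond sumr_ge0 // => b /andP [/mem_drop /(allP w0)] //.
Qed.
End H2sec.

Theorem lemmaC4 (R : realType) (n : nat) (q : 'I_n -> R)
  (hq0 : forall i, 0 <= q i) (hq1 : \sum_i q i = 1)
  (x : R) (hx0 : 0 < x) (hx1 : x < 1) :
  exists S : {set 'I_n},
    [/\ S != finset.set0, x <= qS q S &
        rnorm (2^-1) (q_minus q x) / (log2 (n%:R / x) + 1) ^+ 2 - 4
          <= (Rqs q S)%:~R].
Proof.
have n0 : (0 < n)%N.
  case: n q hq0 hq1 => // q _; rewrite big_ord0 => /eqP; by rewrite eq_sym oner_eq0.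
set w := sort <=%R [seq q i | i <- enum 'I_n].
have hsw : sorted <=%R w by apply: sort_sorted; exact: le_total.
have sizew : size w = n by rewrite size_sort size_map size_enum_ord.
have pw : perm_eq w [seq q i | i <- enum 'I_n] by rewrite perm_sort.
have memw : forall b, b \in w -> exists i, q i = b.
  by move=> b; rewrite (perm_mem pw) => /mapP [i _ ->]; exists i.
have w0 : all (fun b => 0 <= b) w.
  by apply/allP => b /memw [i <-].
have sumw : \sum_(b <- w) b = 1.
  by rewrite (perm_big _ pw) big_map big_enum /=.
have [r [E1 E2 E3]] := @remove_smallE R x w (ltW hx0).
have qmE : q_minus q x = drop r w by [].
have hr : (r < n)%N.
  rewrite ltnNge; apply/negP => rn; move: E2; rewrite take_oversize ?sizew // sumw.
  by move=> /(lt_le_trans hx1); rewrite ltxx.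
have {}E3 : x < \sum_(b <- take r.+1 w) b by apply: E3; rewrite sizew.
set v := drop r w.
set c := \sum_(b <- take r w) b.
have v0 : all (fun b => 0 <= b) v by apply/allP => b /mem_drop /(allP w0).
have c0 : 0 <= c by rewrite /c big_seq sumr_ge0 // => b /mem_take /(allP w0).
have cv : c + \sum_(b <- v) b = 1 by rewrite /c /v -big_cat cat_take_drop sumw.
have sizev : size v = (n - r)%N by rewrite size_drop sizew.
set X := (\sum_(a <- v) Num.sqrt a) ^+ 2.
have sq0 : 0 <= \sum_(a <- v) Num.sqrt a by rewrite sumr_ge0 // => i _; exact: sqrtr_ge0.
have hX : rnorm (2^-1) (q_minus q x) = X.
  rewrite qmE /rnorm invrK.
  rewrite (eq_big_seq (fun a => Num.sqrt a)); last by move=> b /(allP v0) /powR12_sqrt.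
  by rewrite -[2]/(2%:R) powR_mulrn.
rewrite hX.
have X0 : 0 <= X by rewrite /X sqr_ge0.
have Xn : X <= n%:R.
  apply: le_trans (cs_bound _ _ v0) _; rewrite sizev.
  have : \sum_(b <- v) b <= 1 by lra.
  have : ((n - r)%:R : R) <= n%:R by rewrite ler_nat leq_subr.
  have : (0 : R) <= (n - r)%:R by [].
  have : 0 <= \sum_(b <- v) b by rewrite big_seq sumr_ge0 // => b /(allP v0).
  nra.
have nx1 : 1 < n%:R / x.
  rewrite ltr_pdivlMr // mul1r; apply: lt_le_trans hx1 _; by rewrite ler1n.
set L := log2 (n%:R / x) + 1.
have ln20 : 0 < ln (2 : R) by apply: ln_gt0; lra.
have L1 : 1 <= L.
  rewrite /L /log2 lerDr; apply: divr_ge0; last exact: ltW.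
  exact/ltW/ln_gt0.
set B := X / L ^+ 2 - 4.
have [B0|Bpos] := lerP B 0.
  exists [set: 'I_n]; split.
  - by apply/set0Pn; exists (Ordinal n0); rewrite inE.
  - rewrite /qS (eq_bigl (fun _ => true)); last by move=> i; rewrite inE.
    by rewrite hq1; exact: ltW.
  - apply: (le_trans B0); rewrite ler0z /Rqs floor_ge0.
    apply: divr_ge0; first by rewrite /qS sumr_ge0.
    rewrite mulr_ge0 // /qM; apply: (big_ind (fun y => 0 <= y)) => //.
    by move=> y z hy hz; rewrite le_max hy.
apply: contrapT => hno.
set A := 2 * (B + 1).
have key : forall k, (r <= k)%N -> (k < n)%N ->
    \sum_(b <- take k.+1 w) b <= A * nth 0 w k.
  move=> k rk kn.
  set a := nth 0 w k.
  have kw : (k < size w)%N by rewrite sizew.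
  have tk := @take_le R w k hsw kw.
  have xs : x < \sum_(b <- take k.+1 w) b.
    apply: (lt_le_trans E3).
    have -> : k.+1 = (r.+1 + (k - r))%N by rewrite addSn subnKC.
    rewrite takeD big_cat lerDl big_seq sumr_ge0 // => b /mem_take /mem_drop.
    exact: (allP w0).
  have a0 : 0 < a.
    rewrite ltNge; apply/negP => a0.
    have : \sum_(b <- take k.+1 w) b <= 0.
      rewrite big_seq; apply: sumr_le0 => b /(allP tk) hb.
      exact: le_trans hb a0.
    lra.
  set Sa := [set i | q i <= a].
  have [i0 qi0] : exists i, q i = a by apply: memw; rewrite mem_nth.
  have i0S : i0 \in Sa by rewrite inE qi0.
  have SaM : qM q Sa = a.
    apply: (@bigmax_eq R _ Sa q a i0 (ltW a0) i0S qi0) => i; by rewrite inE.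
  have SaS : \sum_(b <- take k.+1 w) b <= qS q Sa.
    have -> : qS q Sa = \sum_(b <- w | b <= a) b.
      rewrite (perm_big _ pw) big_map big_enum_cond /qS.
      by apply: eq_bigl => i; rewrite inE.
    rewrite -(@sum_filter_all R _ _ tk); exact: sum_take_le.
  have Sa0 : Sa != finset.set0 by apply/set0Pn; exists i0.
  have hlt : (Rqs q Sa)%:~R < B.
    rewrite ltNge; apply/negP => hle; apply: hno; exists Sa; split => //.
    exact: (ltW (lt_le_trans xs SaS)).
  have : qS q Sa / (2 * a) < B + 1.
    apply: (lt_le_trans (floorD1_gt _)); rewrite -SaM rmorphD /= -/(Rqs q Sa).
    by rewrite lerD2r ltW.
  rewrite ltr_pdivrMr ?mulr_gt0 // => h.
  apply: (le_trans SaS); rewrite /A; lra.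
have A0 : 0 <= A by rewrite /A; lra.
have hg : good R A c v.
  apply: (@good_intro R) => j; rewrite sizev => hj.
  rewrite /c /v nth_drop -big_cat -takeD addnS.
  apply: key; first exact: leq_addr.
  by rewrite -ltn_subRL.
have hb := @good_bound R A c v A0 c0 v0 hg.
rewrite cv sqrtr1 in hb.
have hs : \sum_(a <- v) Num.sqrt a <= 2 * Num.sqrt A.
  apply: (le_trans hb).
  rewrite -[X in _ <= X]mulr1 ler_wpM2l ?mulr_ge0 ?sqrtr_ge0 //.
have XA : X <= 4 * A.
  have sA : Num.sqrt A ^+ 2 = A by rewrite sqr_sqrtr.
  have := sqrtr_ge0 A.
  rewrite /X; nra.
have L0 : 0 < L by lra.
set y := X / L ^+ 2.
have Xy : X = y * L ^+ 2 by rewrite /y divfK // expf_neq0 // gt_eqF.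
have y4 : 4 < y by move: Bpos; rewrite /B -/y; lra.
have L2 : 1 <= L ^+ 2 by rewrite expr_ge1 // ltW.
have X4 : 4 < X.
  have : y <= y * L ^+ 2 by apply: ler_peMr => //; lra.
  rewrite Xy; lra.
have n4 : 4 < n%:R / x.
  apply: (lt_le_trans (lt_le_trans X4 Xn)).
  by rewrite ler_pdivlMr // ler_piMr // ltW.
have L3 : 3 < L.
  have h4 : ln (4 : R) = ln 2 + ln 2.
    by rewrite -lnM ?posrE //; congr ln; lra.
  have : ln (4 : R) < ln (n%:R / x).
    by rewrite ltr_ln ?posrE //; lra.
  rewrite h4 /L /log2 => h.
  have : 2 < ln (n%:R / x) / ln 2 by rewrite ltr_pdivlMr //; lra.
  lra.
have : y * L ^+ 2 <= 8 * y - 24 by rewrite -Xy; move: XA; rewrite /A /B -/y; lra.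
have L9 : 0 < L ^+ 2 - 9 by rewrite expr2; nra.
have y0 : 0 < y by lra.
have := mulr_gt0 y0 L9; rewrite mulrBr => h9.
have : 9 * y < y * L ^+ 2 by lra.
lra.
Qed.
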